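(* Consider the algorithm SCHEMATIC-ALGO$(G,\mu^*,m^*,\Delta^*,\gamma)$ described in the context. At the end of its last round, with high probability $|U|<\mu^*\cdot(\Delta^* )^\gamma$, where $U$ is the set of edges of $E\setminus H$ underfull w.r.t. the final set $H$.
   Context: Let $G=(V,E)$ be a graph with $n$ vertices, $m$ edges, average degree $d$; $\mu(G)$ is its maximum matching size. Fix a small constant $\epsilon\in(0,1)$ and $\beta:=1/\Theta(\epsilon^3)$. For $H\subseteq E$ and a pair $e=(u,v)$, $\deg_e(H):=\deg_u(H)+\deg_v(H)$. An edge $e$ is underfull w.r.t. $H$ if $\deg_e(H)<(1-\epsilon)\beta$ and overfull w.r.t. $H$ if $\deg_e(H)>\beta$. The parameters satisfy $\mu(G)/(2+\epsilon)\le\mu^*\le n$, $d\le\Delta^*\le n$, $m^*\ge m$, $0<\gamma<1$. SCHEMATIC-ALGO: set $H\leftarrow\emptyset$. Repeat rounds: in each round set Status $\leftarrow$ false; for $i=1,\dots,(100m^*\log n)/(\mu^*(\Delta^* )^\gamma)$, sample an edge $e\in E$ uniformly at random (independently, with repetition); if $e\in E\setminus H$ and $e$ is underfull w.r.t. $H$, then set Status $\leftarrow$ true, $H\leftarrow H\cup\{e\}$, and then while some edge of $H$ is overfull w.r.t. $H$, remove such an edge from $H$. If at the end of a round Status is false, stop the rounds (this is the last round). Then let $U$ be the set of edges of $E\setminus H$ underfull w.r.t. $H$, take any $V_{small}\subseteq V$ with $\{v:\deg_v(U)\le (1-\epsilon)(\Delta^* )^\gamma/\epsilon\}\subseteq V_{small}\subseteq\{v:\deg_v(U)\le(1+\epsilon)(\Delta^*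 )^\gamma/\epsilon\}$, let $E_{small}:=\{(u,v)\in H\cup U: u,v\in V_{small}\}$, and return $\mu(E_{small})$. ''With high probability'' means with probability at least $1-1/\mathrm{poly}(n)$. *)

(* Defs.v *)
From HB Require Import structures.
From mathcomp Require Import all_boot all_order all_algebra.
From mathcomp Require Import all_classical all_reals all_analysis.
Set Implicit Arguments.
Unset Strict Implicit.
Unset Printing Implicit Defensive.
Import Order.TTheory GRing.Theory Num.Theory.
Local Open Scope ring_scope.

(* A graph on the finite vertex type V is given by its edge set
   E : {set {set V}}; an edge is an (unordered) 2-element vertex set. *)
Definition simple_graph (V : finType) (E : {set {set V}}) : Prop :=
  forall e, e \in E -> #|e| = 2%N.

Definition vdeg (V : finType) (H : {set {set V}}) (v : V) : nat :=
  #|[set e in H | v \in e]|.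

Definition edeg (V : finType) (H : {set {set V}}) (e : {set V}) : nat :=
  (\sum_(v in e) vdeg H v)%N.

Definition underfull (R : realType) (eps beta : R) (V : finType)
  (H : {set {set V}}) (e : {set V}) : bool :=
  (edeg H e)%:R < (1 - eps) * beta.

Definition overfull (R : realType) (beta : R) (V : finType)
  (H : {set {set V}}) (e : {set V}) : bool :=
  beta < (edeg H e)%:R.

Definition is_matching (V : finType) (E M : {set {set V}}) : bool :=
  (M \subset E) &&
  [forall e in M, forall f in M, (e != f) ==> [disjoint e & f]].

Definition mu (V : finType) (E : {set {set V}}) : nat :=
  (\max_(M in powerset E | is_matching E M) #|M|)%N.

Definition avg_deg (R : realType) (V : finType) (E : {set {set V}}) : R :=
  (2 * #|E|)%:R / #|V|%:R.

(* A tie-breaking rule for "remove such an (overfull) edge": it must return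
   an overfull edge of H whenever one exists. *)
Definition sel_ok (R : realType) (beta : R) (V : finType)
  (sel : {set {set V}} -> {set V}) : Prop :=
  forall H : {set {set V}}, [exists e in H, overfull beta H e] ->
    sel H \in H /\ overfull beta H (sel H).

(* "while some edge of H is overfull, remove such an edge";
   each iteration removes an edge, so #|H| iterations suffice. *)
Definition cleanup (R : realType) (beta : R) (V : finType)
  (sel : {set {set V}} -> {set V}) (H : {set {set V}}) : {set {set V}} :=
  iter #|H| (fun H' : {set {set V}} => if [exists e in H', overfull beta H' e]
                       then H' :\ sel H' else H') H.

(* one sampling step; state = (H, Status) *)
Definition sample_step (R : realType) (eps beta : R) (V : finType)
  (sel : {set {set V}} -> {set V}) (st : {set {set V}} * bool) (e : {set V})
  : {set {set V}} * bool :=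
  if (e \notin st.1) && underfull eps beta st.1 e
  then (cleanup beta sel (e |: st.1), true) else st.

Definition run_round (R : realType) (eps beta : R) (V : finType)
  (sel : {set {set V}} -> {set V}) (H : {set {set V}}) (s : seq {set V})
  : {set {set V}} * bool :=
  foldl (sample_step eps beta sel) (H, false) s.

(* the samples of round r (0-indexed), rounds having L samples each *)
Definition chunk (V : finType) (L : nat) (s : seq {set V}) (r : nat) : seq {set V} :=
  take L (drop (r * L) s).

(* H at the beginning of round r (equivalently, at the end of round r-1) *)
Fixpoint rstate (R : realType) (eps beta : R) (V : finType)
  (sel : {set {set V}} -> {set V}) (L : nat) (s : seq {set V}) (r : nat)
  : {set {set V}} :=
  match r with
  | 0 => finset.set0
  | r'.+1 => (run_round eps beta sel (rstate eps beta sel L s r') (chunk L s r')).1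
  end.

Definition rstatus (R : realType) (eps beta : R) (V : finType)
  (sel : {set {set V}} -> {set V}) (L : nat) (s : seq {set V}) (r : nat) : bool :=
  (run_round eps beta sel (rstate eps beta sel L s r) (chunk L s r)).2.

Definition Uset (R : realType) (eps beta : R) (V : finType)
  (E H : {set {set V}}) : {set {set V}} :=
  [set e in E | (e \notin H) && underfull eps beta H e].

Definition round_len (R : realType) (n : nat) (mustar mstar Deltastar gamma : R) : nat :=
  Num.truncn (100 * mstar * ln (n%:R : R) / (mustar * Deltastar `^ gamma)).

(* Bad event, decided from the sample stream s of length T: the algorithm
   has a last round r (rounds 0..r-1 had Status true, round r has Status
   false), entirely contained in the T samples, and at its end
   |U| >= mustar Deltastar^gamma. *)
Definition bad_run (R : realType) (eps beta : R) (V : finType)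
  (E : {set {set V}}) (sel : {set {set V}} -> {set V})
  (mustar mstar Deltastar gamma : R) (T : nat) (s : seq {set V}) : bool :=
  let L := round_len #|V| mustar mstar Deltastar gamma in
  [exists r : 'I_T.+1,
    [&& (r.+1 * L <= T)%N,
        [forall r' : 'I_r, rstatus eps beta sel L s r'],
        ~~ rstatus eps beta sel L s r &
        mustar * Deltastar `^ gamma
          <= #|Uset eps beta E (rstate eps beta sel L s r.+1)|%:R]].

(* Probability of the bad event when the first T samples are i.i.d. uniform
   over E: (#bad sample vectors in E^T) / m^T. *)
Definition bad_prob (R : realType) (eps beta : R) (V : finType)
  (E : {set {set V}}) (sel : {set {set V}} -> {set V})
  (mustar mstar Deltastar gamma : R) (T : nat) : R :=
  #|[set w : {ffun 'I_T -> {set V}} |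
       [forall i, w i \in E] &&
       bad_run eps beta E sel mustar mstar Deltastar gamma T (codom w)]|%:R
  / (#|E| ^ T)%:R.

(* Main.v *)
Require Import Defs.
From HB Require Import structures.
From mathcomp Require Import all_boot all_order all_algebra.
From mathcomp Require Import all_classical all_reals all_analysis.
From mathcomp Require Import ring lra zify.
Import Order.TTheory GRing.Theory Num.Theory.
Local Open Scope ring_scope.
Section Count.
Variable (X : finType) (E : {set X}).

Fixpoint seqs (T : nat) : seq (seq X) :=
  if T is T'.+1 then flatten [seq [seq x :: s | s <- seqs T'] | x <- enum E]
  else [:: [::]].

Lemma mem_seqs T s : size s = T -> all (mem E) s -> s \in seqs T.
Proof.
elim: T s => [|T IH] [|x s] //= [Hs] /andP[xE sE].
apply/flatten_mapP; exists x; first by rewrite mem_enum.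
by apply: map_f; apply: IH.
Qed.

Lemma count_seqsS T (P : pred (seq X)) :
  count P (seqs T.+1) = (\sum_(x in E) count (fun s => P (x :: s)) (seqs T))%N.
Proof.
rewrite /= count_flatten sumnE !big_map -big_enum /=.
by apply: eq_bigr => x _; rewrite count_map.
Qed.

Lemma size_seqs T : size (seqs T) = (#|E| ^ T)%N.
Proof.
elim: T => [|T IH] //.
rewrite -count_predT count_seqsS.
under eq_bigr do rewrite count_predT IH.
by rewrite sum_nat_const expnS.
Qed.

Lemma count_has (I : eqType) (P : I -> pred (seq X)) (rs : seq I) (l : seq (seq X)) :
  (count (fun s => has (P ^~ s) rs) l <= \sum_(r <- rs) count (P r) l)%N.
Proof.
elim: l => [|x l IH] /=; first by rewrite big1.
rewrite big_split /= leq_add //.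
elim: rs {IH} => [|r rs IHr] /=; first by rewrite big_nil.
by rewrite big_cons; case: (P r x) => //=.
Qed.

Lemma codom_inj (T : nat) (w1 w2 : {ffun 'I_T -> X}) :
  codom w1 = codom w2 -> w1 = w2.
Proof.
move=> H; apply/ffunP => i.
have [x0] : exists x0 : X, True by exists (w1 i).
move=> _.
by rewrite -(enum_rankK i) -!(nth_codom x0) H.
Qed.

Lemma card_le_count (T : nat) (P : pred (seq X)) :
  (#|[set w : {ffun 'I_T -> X} | [forall i, w i \in E] && P (codom w)]|
     <= count P (seqs T))%N.
Proof.
rewrite cardE -size_filter -(size_map (fun w : {ffun 'I_T -> X} => codom w)).
apply: uniq_leq_size.
  rewrite map_inj_uniq ?enum_uniq //.
  by move=> w1 w2; apply: codom_inj.
move=> y /mapP[w]; rewrite mem_enum inE => /andP[/forallP HE HP] ->.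
rewrite mem_filter HP /=; apply: mem_seqs.
  by rewrite size_codom card_ord.
by apply/allP => z /codomP[i ->]; apply: HE.
Qed.

Variable R : realType.

Lemma cnt0 (a : R) L : 0 <= a -> forall T (B : {set X}), #|B|%:R <= a -> (L <= T)%N ->
  (count (fun s => all (mem B) (take L s)) (seqs T))%:R <= a ^+ L * (#|E|%:R) ^+ (T - L).
Proof.
move=> a0; elim: L => [|L IH] T B HB HLT.
  rewrite expr0 mul1r subn0 -natrX -size_seqs ler_nat.
  by rewrite -count_predT; apply: sub_count.
case: T HLT => [|T] // HLT.
rewrite count_seqsS natr_sum subSS.
apply: (@le_trans _ _ (\sum_(x in E) ((x \in B)%:R * (a ^+ L * #|E|%:R ^+ (T - L))))).
  apply: ler_sum => x _ /=.
  case: (x \in B) => /=.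
    by rewrite mul1r; apply: IH.
  by rewrite mul0r (@eq_count _ _ pred0) ?count_pred0 // => s /=; rewrite andbF.
rewrite -mulr_suml exprS -mulrA ler_wpM2r //.
  by rewrite mulr_ge0 // exprn_ge0.
rewrite -natr_sum (le_trans _ HB) // ler_nat -sum1_card.
rewrite big_mkcond [X in (_ <= X)%N]big_mkcond /=.
by apply: leq_sum => i _; case: (i \in E); case: (i \in B).
Qed.

Lemma cnt_bound (a : R) L : 0 <= a -> forall j T (A : seq X -> {set X}),
  (forall p, #|A p|%:R <= a) -> (j + L <= T)%N ->
  (count (fun s => all (mem (A (take j s))) (take L (drop j s))) (seqs T))%:R
    <= a ^+ L * (#|E|%:R) ^+ (T - L).
Proof.
move=> a0; elim=> [|j IH] T A HA HT.
  rewrite (@eq_count _ _ (fun s => all (mem (A [::])) (take L s))); last first.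
    by move=> s; rewrite take0 drop0.
  by apply: cnt0.
case: T HT => [|T] // HT.
rewrite count_seqsS natr_sum.
apply: (@le_trans _ _ (\sum_(x in E) (a ^+ L * #|E|%:R ^+ (T - L)))).
  apply: ler_sum => x _ /=.
  exact: (IH T (fun p => A (x :: p))).
rewrite sumr_const. rewrite -[X in X <= _]mulr_natr -mulrA -exprSr subSn //.
by move: HT; rewrite addSn ltnS; apply: leq_trans; apply: leq_addl.
Qed.

End Count.
Section Dyn.
Variables (R : realType) (eps beta : R) (V : finType)
  (sel : {set {set V}} -> {set V}).

Lemma fold_true (s : seq {set V}) st : st.2 = true ->
  (foldl (sample_step eps beta sel) st s).2 = true.
Proof.
elim: s st => [|e s IH] st //= H2; apply: IH.
by rewrite /sample_step; case: ifP.
Qed.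

Lemma round_false (H : {set {set V}}) (s : seq {set V}) : (run_round eps beta sel H s).2 = false ->
  (run_round eps beta sel H s).1 = H /\
  all (fun e => ~~ ((e \notin H) && underfull eps beta H e)) s.
Proof.
rewrite /run_round; elim: s => [|e s IH] //=.
case Hst: (sample_step eps beta sel (H, false) e) => [H' b].
move: Hst; rewrite /sample_step /=; case: ifP => Hc [<- <-].
  by rewrite fold_true.
by move/IH => [-> ->].
Qed.

Lemma vdegU (e : {set V}) (H : {set {set V}}) (v : V) : e \notin H -> vdeg (e |: H) v = (vdeg H v + (v \in e))%N.
Proof.
move=> eH; rewrite /vdeg; case: (boolP (v \in e)) => ve.
  have -> : [set f in e |: H | v \in f] = e |: [set f in H | v \in f].
    by apply/setP => f; rewrite !inE; case: eqP => [->|] //=; rewrite ve.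
  by rewrite cardsU1 inE (negbTE eH) addn1 add1n.
rewrite addn0; apply: eq_card => f; rewrite !inE.
by case: eqP => [->|] //=; rewrite (negbTE ve) andbF.
Qed.

Lemma vdeg0 (v : V) : vdeg (finset.set0 : {set {set V}}) v = 0%N.
Proof.
rewrite /vdeg; apply/eqP; rewrite cards_eq0; apply/eqP/setP => e.
by rewrite !inE.
Qed.

Lemma edegU (e : {set V}) (H : {set {set V}}) : e \notin H -> edeg (e |: H) e = (edeg H e + #|e|)%N.
Proof.
move=> eH; rewrite /edeg -sum1_card -big_split /=.
by apply: eq_bigr => v ve; rewrite vdegU // ve.
Qed.

Definition phi (t : R) (H : {set {set V}}) : R :=
  \sum_(v : V) (t * (vdeg H v)%:R - (vdeg H v)%:R ^+ 2).

Lemma phiU t (e : {set V}) (H : {set {set V}}) : e \notin H ->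
  phi t (e |: H) = phi t H + #|e|%:R * (t - 1) - 2 * (edeg H e)%:R.
Proof.
move=> eH; rewrite /phi.
have -> : \sum_(v : V) (t * (vdeg (e |: H) v)%:R - (vdeg (e |: H) v)%:R ^+ 2)
  = \sum_(v : V) ((t * (vdeg H v)%:R - (vdeg H v)%:R ^+ 2)
                  + (if v \in e then t - 1 - 2 * (vdeg H v)%:R else 0)).
  apply: eq_bigr => v _; rewrite vdegU //; case: (v \in e); rewrite natrD /=.
    by rewrite expr2; ring.
  by rewrite !addr0.
rewrite big_split /= -big_mkcond /= -addrA; congr (_ + _).
rewrite sumrB sumr_const /edeg natr_sum mulr_sumr -mulr_natl.
by rewrite [#|e|%:R * _]mulr_natl.
Qed.

Variables (E : {set {set V}}) (k : nat).
Hypothesis HE2 : forall e, e \in E -> #|e| = 2%N.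
Hypothesis Hins : forall a : nat, a%:R < (1 - eps) * beta -> (a + 2 <= k)%N.
Hypothesis Hrem : forall b : nat, beta < b%:R -> (k < b)%N.
Hypothesis Hsel : sel_ok beta sel.

Let t : R := k%:R - 2^-1.

Lemma phi_ins (e : {set V}) (H : {set {set V}}) : e \in E -> e \notin H ->
  underfull eps beta H e -> phi t H + 1 <= phi t (e |: H).
Proof.
move=> eE eH; rewrite /underfull => /Hins; rewrite -(ler_nat R) natrD => Hk.
rewrite phiU // HE2 // /t; lra.
Qed.

Lemma phi_rem (e : {set V}) (H : {set {set V}}) : e \in E -> e \in H ->
  overfull beta H e -> phi t H + 1 <= phi t (H :\ e).
Proof.
move=> eE eH; rewrite /overfull => /Hrem.
have eH' : e \notin H :\ e by rewrite finset.setD11.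
have HH : e |: (H :\ e) = H by rewrite finset.setD1K.
move=> Hk.
have := @edegU e (H :\ e) eH'; rewrite HH HE2 // => Hd.
have := @phiU t e (H :\ e) eH'; rewrite HH HE2 // => ->.
move: Hk; rewrite Hd -addn1 -(ler_nat R) !natrD /t; lra.
Qed.

Lemma cleanup_ok (H : {set {set V}}) : H \subset E ->
  cleanup beta sel H \subset H /\ phi t H <= phi t (cleanup beta sel H).
Proof.
move=> HsE; rewrite /cleanup; elim: #|H| => [|n [IH1 IH2]] /=; first by [].
case: ifP => Hx; last by [].
have [sH ov] := Hsel _ Hx.
split; first by apply: (fintype.subset_trans _ IH1); rewrite subD1set.
have sE : sel (iter n (fun H' : {set {set V}} =>
     if [exists e in H', overfull beta H' e] then H' :\ sel H' else H') H) \in E.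
  by apply: (fintype.subsetP HsE); apply: (fintype.subsetP IH1).
apply: (le_trans IH2); apply: (le_trans _ (@phi_rem _ _ sE sH ov)).
by rewrite lerDl.
Qed.

Lemma step_inv (st : {set {set V}} * bool) (e : {set V}) : e \in E -> st.1 \subset E ->
  (sample_step eps beta sel st e).1 \subset E /\
  phi t st.1 - (st.2)%:R <= phi t (sample_step eps beta sel st e).1 - ((sample_step eps beta sel st e).2)%:R.
Proof.
move=> eE sE; rewrite /sample_step; case: ifP => [/andP[eH uf]|_]; last by [].
have sE' : e |: st.1 \subset E by rewrite finset.subUset finset.sub1set eE.
have [c1 c2] := @cleanup_ok _ sE'.
split; first exact: fintype.subset_trans c1 sE'.
have := @phi_ins _ _ eE eH uf; case: (st.2) => /=; lra.
Qed.

Lemma round_inv (H : {set {set V}}) (s : seq {set V}) : H \subset E -> all (mem E) s ->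
  (run_round eps beta sel H s).1 \subset E /\
  phi t H + ((run_round eps beta sel H s).2)%:R <= phi t (run_round eps beta sel H s).1.
Proof.
move=> HE sE; rewrite /run_round.
suff : forall st : {set {set V}} * bool, st.1 \subset E ->
  (foldl (sample_step eps beta sel) st s).1 \subset E /\
  phi t st.1 - (st.2)%:R <= phi t (foldl (sample_step eps beta sel) st s).1
     - ((foldl (sample_step eps beta sel) st s).2)%:R.
  by move=> /(_ (H, false) HE) /= [-> h]; split => //; lra.
elim: s sE => [|e s IH] /= => [_|/andP[eE sE]] st stE; first by split => //; lra.
have [h1 h2] := @step_inv _ _ eE stE.
have [h3 h4] := IH sE _ h1.
by split => //; lra.
Qed.

Lemma phi_ub (H : {set {set V}}) : phi t H <= #|V|%:R * (k%:R ^+ 2).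
Proof.
apply: (@le_trans _ _ (\sum_(v : V) k%:R ^+ 2)); last first.
  by rewrite sumr_const mulr_natl.
rewrite /phi; apply: ler_sum => v _.
have d0 : 0 <= (vdeg H v)%:R :> R by [].
rewrite /t; set d := (vdeg H v)%:R; set kk := k%:R.
have k0 : 0 <= kk by rewrite /kk.
nra.
Qed.

Lemma all_chunk (L : nat) (s : seq {set V}) r : all (mem E) s -> all (mem E) (chunk L s r).
Proof.
move=> /allP sE; apply/allP => x /mem_take /mem_drop; exact: sE.
Qed.

Lemma rstate_phi (L : nat) (s : seq {set V}) : all (mem E) s -> forall r,
  (forall r', (r' < r)%N -> rstatus eps beta sel L s r') ->
  rstate eps beta sel L s r \subset E /\ r%:R <= phi t (rstate eps beta sel L s r).
Proof.
move=> sE; elim=> [|r IH] Hr /=.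
  split; first exact: finset.sub0set.
  by rewrite /phi big1 // => v _; rewrite vdeg0 mulr0 expr0n subr0.
have [IH1 IH2] := IH (fun r' h => Hr r' (ltnW h)).
have := @round_inv _ (chunk L s r) IH1 (@all_chunk L s r sE).
move=> [h1 h2]; split => //.
have := Hr r (ltnSn r); rewrite /rstatus => Hst; rewrite Hst in h2.
move: h2; rewrite -addn1 natrD /=; lra.
Qed.

End Dyn.

Section Rst.
Variables (R : realType) (eps beta : R) (V : finType)
  (sel : {set {set V}} -> {set V}) (L : nat) (s : seq {set V}).

Lemma chunk_take r j : (r * L + L <= j)%N -> chunk L (take j s) r = chunk L s r.
Proof.
move=> H; rewrite /chunk !take_drop take_takel //.
by rewrite addnC.
Qed.

Lemma rstate_take r j : (r * L <= j)%N ->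
  rstate eps beta sel L (take j s) r = rstate eps beta sel L s r.
Proof.
elim: r => [|r IH] //= H.
have H1 : (r * L + L <= j)%N by rewrite -mulSnr.
rewrite IH ?chunk_take //.
by apply: leq_trans H1; apply: leq_addr.
Qed.

End Rst.

Section Deg.
Variables (R : realType) (eps beta : R) (V : finType)
  (sel : {set {set V}} -> {set V}) (E : {set {set V}}).
Hypothesis HE2 : forall e, e \in E -> #|e| = 2%N.
Hypothesis Hsel : sel_ok beta sel.
Hypothesis Hb2 : beta < 2.
Hypothesis Hpos : 0 < (1 - eps) * beta.

Lemma cleanup1 (e : {set V}) : #|e| = 2%N -> cleanup beta sel [set e] = finset.set0.
Proof.
move=> e2; rewrite /cleanup cards1 /=.
have ov : overfull beta [set e] e.
  rewrite /overfull /edeg.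
  rewrite (eq_bigr (fun _ => 1%N)) ?sum1_card ?e2 //.
  move=> v ve; rewrite /vdeg (_ : [set f in [set e] | v \in f] = [set e]) ?cards1 //.
  by apply/setP => f; rewrite !inE; case: eqP => [->|] //; rewrite ve.
have Hx : [exists e' in [set e], overfull beta [set e] e'].
  by apply/existsP; exists e; rewrite set11 ov.
rewrite Hx; have [/set1P -> _] := Hsel _ Hx.
by rewrite finset.setDv.
Qed.

Lemma deg_fold (s : seq {set V}) b : all (mem E) s ->
  (foldl (sample_step eps beta sel) (finset.set0, b) s).1 = finset.set0.
Proof.
elim: s b => [|e s IH] b //= /andP[eE sE].
rewrite {2}/sample_step; case: ifP => _; last by apply: IH.
by rewrite finset.setU0 cleanup1 ?HE2 //; apply: IH.
Qed.

Lemma deg_rstate (L : nat) (s : seq {set V}) r : all (mem E) s ->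
  rstate eps beta sel L s r = finset.set0.
Proof.
move=> sE; elim: r => [|r IH] //=.
by rewrite IH /run_round deg_fold // all_chunk.
Qed.

Lemma deg_status (L : nat) (s : seq {set V}) r : all (mem E) s -> (0 < L)%N ->
  (r.+1 * L <= size s)%N -> rstatus eps beta sel L s r.
Proof.
move=> sE L0 Hs; rewrite /rstatus deg_rstate //.
apply/negPn/negP => /negbTE /round_false [_].
have : (0 < size (chunk L s r))%N.
  rewrite /chunk size_takel // size_drop leq_subRL //.
    by rewrite -mulSnr.
  by apply: leq_trans Hs; rewrite mulSnr leq_addr.
case: (chunk L s r) => [|x c] //= _ /andP[].
rewrite finset.in_set0 /= /underfull /edeg big1; last by move=> v _; rewrite vdeg0.
by rewrite Hpos.
Qed.

End Deg.

Lemma count_P (X : finType) (E : {set X}) (R : realType) (a : R) (L T j : nat)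
  (A : seq X -> {set X}) (b : bool) :
  0 <= a -> (forall p, #|A p|%:R <= a) -> (b -> j + L <= T)%N -> (0 < #|E|)%N ->
  (count (fun s => b && all (mem (A (take j s))) (take L (drop j s))) (seqs X E T))%:R
    <= (a / #|E|%:R) ^+ L * #|E|%:R ^+ T.
Proof.
move=> a0 HA Hb m0; case: b Hb => [Hb|_]; last first.
  rewrite (@eq_count _ _ pred0) ?count_pred0 //.
  by rewrite mulr_ge0 // exprn_ge0 // divr_ge0.
have HT := Hb isT.
rewrite (@eq_count _ _ (fun s => all (mem (A (take j s))) (take L (drop j s)))) //.
apply: (le_trans (@cnt_bound X E R a L a0 j T A HA HT)).
have LT : (L <= T)%N by apply: leq_trans HT; apply: leq_addl.
have mR : #|E|%:R != 0 :> R by rewrite pnatr_eq0 -lt0n.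
rewrite -{2}(subnK LT) exprD expr_div_n.
by rewrite [_ ^+ (T - L) * _]mulrC mulrA divfK ?expf_neq0.
Qed.

Lemma sum_le_const (R : realType) (I : Type) (rs : seq I) (G : I -> R) (c : R) :
  (forall r, G r <= c) -> \sum_(r <- rs) G r <= (size rs)%:R * c.
Proof.
move=> HG; elim: rs => [|r rs IH]; first by rewrite big_nil mul0r.
by rewrite big_cons /= -addn1 natrD mulrDl mul1r addrC lerD.
Qed.

Lemma mu_ge1 (V : finType) (E : {set {set V}}) : (0 < #|E|)%N -> (1 <= mu E)%N.
Proof.
rewrite card_gt0 => /set0Pn[e eE].
rewrite /mu; have := @leq_bigmax_cond _ (fun M => (M \in powerset E) && is_matching E M)
  (fun M : {set {set V}} => #|M|) [set e]; rewrite cards1; apply.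
rewrite powersetE finset.sub1set eE /is_matching finset.sub1set eE /=.
apply/forallP => f; apply/implyP => /set1P ->; apply/forallP => g.
by apply/implyP => /set1P ->; rewrite eqxx.
Qed.

Lemma Uset_card (R : realType) (eps beta : R) (V : finType) (E H : {set {set V}}) :
  Uset eps beta E H \subset E.
Proof. by apply/fintype.subsetP => e; rewrite inE => /andP[]. Qed.

Theorem corollary3p3 (R : realType) (eps beta : R) :
  0 < eps < 1 -> (eps ^+ 3)^-1 <= beta ->
  exists c : R, 0 < c /\ exists N : nat,
  forall (V : finType) (E : {set {set V}}) (mustar mstar Deltastar gamma : R)
         (sel : {set {set V}} -> {set V}) (T : nat),
    (N <= #|V|)%N ->
    simple_graph E -> (0 < #|E|)%N ->
    (mu E)%:R / (2 + eps) <= mustar -> mustar <= #|V|%:R ->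
    avg_deg R E <= Deltastar -> Deltastar <= #|V|%:R ->
    #|E|%:R <= mstar ->
    0 < gamma < 1 ->
    sel_ok beta sel ->
    bad_prob eps beta E sel mustar mstar Deltastar gamma T <= #|V|%:R `^ (- c).
Proof.
move=> /andP[e0 e1] Hb.
have e3 : 0 < eps ^+ 3 by rewrite exprn_gt0.
have b0 : 0 < beta by apply: lt_le_trans Hb; rewrite invr_gt0.
have epsb : 1 <= eps ^+ 3 * beta.
  by have := ler_wpM2l (ltW e3) Hb; rewrite mulfV ?gt_eqF.
have Hpos : 0 < (1 - eps) * beta by rewrite mulr_gt0 // subr_gt0.
set k := Num.truncn beta.
exists 1; split => //.
exists (maxn (k ^ 2 + 2) (Num.truncn (expR 1 : R)).+1)%N.
move=> V E mustar mstar Deltastar gamma sel T.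
rewrite geq_max => /andP[HN1 HN2] HE2 m0 Hmu1 Hmu2 Hd1 Hd2 Hm /andP[g0 g1] Hsel.
set n := #|V|; set m := #|E|.
have n0 : (0 < n)%N by apply: leq_trans HN1; rewrite addn2.
have nR0 : 0 < n%:R :> R by rewrite ltr0n.
have mR0 : 0 < m%:R :> R by rewrite ltr0n.
rewrite powR_inv1 ?ler0n //.
have lnn : 1 < ln (n%:R : R).
  have : expR 1 < n%:R :> R by rewrite -truncn_lt_nat ?expR_ge0.
  by rewrite -ltr_ln ?posrE ?expR_gt0 // expRK.
have mus0 : 0 < mustar.
  apply: lt_le_trans Hmu1; rewrite divr_gt0 ?ltr0n ?mu_ge1 //.
  lra.
have D0 : 0 < Deltastar.
  apply: lt_le_trans Hd1; rewrite /avg_deg divr_gt0 // ltr0n muln_gt0 /=.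
  exact: m0.
set K := mustar * Deltastar `^ gamma.
have K0 : 0 < K by rewrite mulr_gt0 // powR_gt0.
have Ubound : forall H : {set {set V}}, (#|Uset eps beta E H| <= m)%N.
  by move=> H; apply: subset_leq_card; apply: Uset_card.
have Ub' : forall H, (#|Uset eps beta E H|%:R <= m%:R :> R).
  by move=> H; rewrite ler_nat Ubound.
rewrite /bad_prob -/m.
set S := finset _.
have inS : forall w, w \in S -> [forall i, w i \in E] /\
   bad_run eps beta E sel mustar mstar Deltastar gamma T (codom w).
  by move=> w; rewrite inE => /andP[].
have ge0 : 0 <= n%:R^-1 :> R by rewrite invr_ge0 ler0n.
case: (leP K m%:R) => HKm; last first.
  rewrite (_ : S = finset.set0) ?cards0 ?mul0r //.
  apply/finset.setP => w; rewrite finset.in_set0.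
  case: (boolP (w \in S)) => // /inS[_].
  case/existsP => r /and4P[_ _ _ HU].
  by have := lt_le_trans HKm (le_trans HU (Ub' _)); rewrite ltxx.
set L := round_len n mustar mstar Deltastar gamma.
have HLx : 100 * mstar * ln (n%:R : R) / K <= L%:R + 1.
  have : (Num.truncn (100 * mstar * ln (n%:R : R) / K) <= L)%N by [].
  rewrite truncn_le_nat => /ltW; congr (_ <= _).
  by rewrite -addn1 natrD.
have p0 : 0 < K / m%:R by rewrite divr_gt0.
have p1 : K / m%:R <= 1 by rewrite ler_pdivrMr // mul1r.
have HpL : 99 * ln (n%:R : R) <= K / m%:R * L%:R.
  have hx : K / m%:R * (100 * mstar * ln (n%:R : R) / K)
            = 100 * (mstar / m%:R) * ln (n%:R : R).
    by field; rewrite ?gt_eqF.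
  have hy : 1 <= mstar / m%:R by rewrite ler_pdivlMr // mul1r.
  have h1 := ler_wpM2l (ltW p0) HLx.
  rewrite hx in h1.
  have h2 : 100 * ln (n%:R : R) <= 100 * (mstar / m%:R) * ln (n%:R : R).
    rewrite -mulrA ler_wpM2l // ler_peMl //; lra.
  lra.
have L0 : (0 < L)%N.
  rewrite lt0n; apply/negP => /eqP L0; rewrite L0 mulr0 in HpL; lra.
case: (ltP beta 2) => Hb2.
  rewrite (_ : S = finset.set0) ?cards0 ?mul0r //.
  apply/finset.setP => w; rewrite finset.in_set0.
  case: (boolP (w \in S)) => // /inS[/forallP HwE].
  case/existsP => r /and4P[c1 _ c3 _].
  have sE : all (mem E) (codom w).
    by apply/allP => x /codomP[i ->]; apply: HwE.
  have Hs : (r.+1 * L <= size (codom w))%N by rewrite size_codom card_ord.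
  by rewrite (@deg_status _ _ _ _ _ _ HE2 Hsel Hb2 Hpos _ _ _ sE L0 Hs) in c3.
have Hins : forall a : nat, a%:R < (1 - eps) * beta -> (a + 2 <= k)%N.
  move=> a Ha; rewrite addn2 truncn_gt_nat.
  rewrite leNgt; apply/negP => Hlt.
  move: Hlt; rewrite -addn2 natrD => Hlt.
  case: a Ha Hlt => [|a] Ha Hlt; first by rewrite add0r in Hlt; lra.
  have y1 : 1 <= a.+1%:R :> R by rewrite ler1n.
  move: Ha Hlt y1; set y := a.+1%:R => Ha Hlt y1.
  have h1 : eps * beta < 2 by lra.
  have h2 : 1 < (1 - eps) * beta by lra.
  have h3 : eps < 2 / 3 by nra.
  have h4 : eps ^+ 2 < 4 / 9 by rewrite expr2; nra.
  have h5 : eps ^+ 3 * beta = eps ^+ 2 * (eps * beta) by rewrite exprS; ring.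
  have h6 : eps ^+ 2 * (eps * beta) <= eps ^+ 2 * 2.
    by rewrite ler_wpM2l ?exprn_ge0 ?ltW.
  lra.
have Hrem : forall b : nat, beta < b%:R -> (k < b)%N.
  by move=> b; rewrite truncn_lt_nat // ltW.
set R0 := (n * k ^ 2)%N.
pose A r (p : seq {set V}) : {set {set V}} :=
  if K <= #|Uset eps beta E (rstate eps beta sel L p r)|%:R
  then E :\: Uset eps beta E (rstate eps beta sel L p r) else finset.set0.
pose P r (s : seq {set V}) :=
  (r.+1 * L <= T)%N && all (mem (A r (take (r * L) s))) (take L (drop (r * L) s)).
have HS : (#|S| <= count (fun s => has (P ^~ s) (iota 0 R0.+1)) (seqs _ E T))%N.
  apply: leq_trans (card_le_count _ _ _ _).
  apply: subset_leq_card; apply/fintype.subsetP => w /inS[HwE Hbad].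
  rewrite inE HwE andTb.
  move: Hbad => /existsP[r /and4P[c1 /forallP c2 c3 c4]].
  have sE : all (mem E) (codom w).
    by apply/allP => x /codomP[i ->]; apply: (forallP HwE).
  apply/seq.hasP; exists (val r).
    rewrite mem_iota /= add0n ltnS.
    have [_ Hphi] := @rstate_phi _ _ _ _ _ _ _ HE2 Hins Hrem Hsel _ _ sE _ (fun r' h => c2 (Ordinal h)).
    have := le_trans Hphi (phi_ub _ _ _ _).
    by rewrite -natrX -natrM ler_nat.
  rewrite /P /A c1 /= rstate_take //.
  have [Hst Hall] := @round_false _ _ _ _ _ _ _ (negbTE c3).
  move: c4; rewrite /= Hst => c4.
  rewrite c4; apply/allP => x xin.
  have xE : x \in E by apply: (allP sE); apply: mem_drop (mem_take xin).
  rewrite !inE; apply/andP; split; last exact: xE.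
  apply/negP => /and3P[_ h1 h2].
  by move: (allP Hall x xin); rewrite h1 h2.
have Hcount : forall r, (count (P r) (seqs _ E T))%:R
    <= ((m%:R - K) / m%:R) ^+ L * m%:R ^+ T :> R.
  move=> r; apply: (@count_P _ E R (m%:R - K) L T (r * L) (A r) (r.+1 * L <= T)%N).
  - by rewrite subr_ge0.
  - move=> p; rewrite /A; case: ifP => h; last by rewrite cards0 subr_ge0.
    rewrite cardsDS ?Uset_card // natrB ?Ubound //; lra.
  - by move=> h; rewrite -mulSnr.
  - exact: m0.
have H1 : (#|S|%:R : R) <= (R0.+1)%:R * (((m%:R - K) / m%:R) ^+ L * m%:R ^+ T).
  apply: (le_trans (_ : _ <= (count (fun s => has (P ^~ s) (iota 0 R0.+1)) (seqs _ E T))%:R)).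
    by rewrite ler_nat.
  apply: (le_trans (_ : _ <= (\sum_(r <- iota 0 R0.+1) count (P r) (seqs _ E T))%:R)).
    by rewrite ler_nat count_has.
  rewrite natr_sum -{2}(size_iota 0 R0.+1).
  exact: sum_le_const.
apply: (le_trans (_ : _ <= (R0.+1)%:R * ((m%:R - K) / m%:R) ^+ L)).
  by rewrite natrX ler_pdivrMr ?exprn_gt0 // -mulrA.
have q0 : 0 <= (m%:R - K) / m%:R by rewrite divr_ge0 // subr_ge0.
have q1 : (m%:R - K) / m%:R <= expR (- (K / m%:R)).
  have -> : (m%:R - K) / m%:R = 1 + - (K / m%:R) by field; rewrite gt_eqF.
  exact: expR_ge1Dx.
have q2 : ((m%:R - K) / m%:R) ^+ L <= (n%:R ^+ 3)^-1.
  apply: (le_trans (lerXn2r L _ _ q1)); rewrite ?nnegrE ?expR_ge0 //.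
  rewrite -expRM_natr -[n%:R in X in _ <= X]lnK ?posrE // -expRM_natl -expRN.
  rewrite ler_expR mulNr lerN2; apply: le_trans HpL.
  by apply: ler_wpM2r; [apply: ln_ge0; rewrite ler1n | rewrite ler_nat].
have HR0 : (R0.+1 <= n * n)%N.
  have h2 := leq_mul (leqnn n) HN1.
  rewrite /R0; apply: leq_trans h2.
  by rewrite mulnDr -addn1 leq_add2l muln_gt0 n0.
apply: (le_trans (ler_wpM2l _ q2)) => //.
have -> : (n%:R : R)^-1 = n%:R ^+ 2 / n%:R ^+ 3.
  by rewrite [n%:R ^+ 3]exprSr invfM mulrA mulfV ?mul1r // expf_neq0 // gt_eqF.
rewrite ler_wpM2r ?invr_ge0 ?exprn_ge0 //.
by rewrite expr2 -natrM ler_nat.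
Qed.
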